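(* Let $(U,V)$ be a one-dimensional robot game. Its set of winning counter values is different from $\{0\}$ if and only if there exists a counter value $x\neq 0$ such that for every $v\in V$ there is $u\in U$ with $u+v=-x$.
   Context: A robot game in dimension one is a pair $(U,V)$ of finite nonempty subsets of $\mathbb{Z}$; $U$ belongs to the reacher and $V$ to the opponent. From an initial counter value $x_0\in\mathbb{Z}$, a play proceeds in rounds: in a round starting at counter value $x$, the opponent chooses $v\in V$ and the counter becomes $x+v$, then the reacher chooses $u\in U$ and the counter becomes $x+v+u$, where the round ends. The reacher wins the play if some round ends at $0$; by convention the reacher wins immediately if the play starts at $0$ (so $0$ is always winning). Strategies are functions from play prefixes to moves. A counter value $x$ is winning if the reacher has a strategy such that, against every opponent strategy, the play from $x$ is won by the reacher. (The paper calls the winning set trivial when it is $\{0\}$.) *)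

(* Defs.v *)
From mathcomp Require Import all_boot all_order all_algebra.
Set Implicit Arguments. Unset Strict Implicit. Unset Printing Implicit Defensive.
Import Order.TTheory GRing.Theory Num.Theory.
Local Open Scope ring_scope.

(* A one-dimensional robot game (U,V): U (reacher) and V (opponent) are
   finite nonempty sets of integers, represented as sequences. *)

(* A strategy maps a play prefix (initial counter value followed by the
   moves played so far) to a move. *)
Definition strategy := seq int -> int.

Definition legal (S : seq int) (s : strategy) : Prop := forall h, s h \in S.

(* Moves of even index (0,2,...)
   are the opponent's, moves of odd index are the reacher's. *)
Fixpoint moves (x0 : int) (sigma tau : strategy) (n : nat) : seq int :=
  match n with
  | 0 => [::]
  | n'.+1 =>
      let h := moves x0 sigma tau n' in
      rcons h (if odd n' then sigma (x0 :: h) else tau (x0 :: h))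
  end.

(* Counter value at the end of round k (rounds numbered from 0). *)
Definition round_end (x0 : int) (sigma tau : strategy) (k : nat) : int :=
  x0 + \sum_(m <- moves x0 sigma tau (k.*2.+2)) m.

Definition reacher_wins (x0 : int) (sigma tau : strategy) : Prop :=
  x0 = 0 \/ exists k, round_end x0 sigma tau k = 0.

Definition winning (U V : seq int) (x : int) : Prop :=
  exists sigma, legal U sigma /\
    forall tau, legal V tau -> reacher_wins x sigma tau.

(* Main.v *)
From Stdlib Require Import Classical.
Require Import Defs.
From mathcomp Require Import all_boot all_order all_algebra.
From mathcomp Require Import ring.
Import Order.TTheory GRing.Theory Num.Theory.
Local Open Scope ring_scope.

Lemma sum_rcons (s : seq int) a : \sum_(m <- rcons s a) m = \sum_(m <- s) m + a.
Proof. by rewrite -cats1 big_cat big_seq1. Qed.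

Lemma head_in (S : seq int) : S != [::] -> head 0 S \in S.
Proof. by case: S => //= a s _; rewrite mem_head. Qed.

Lemma moves2 x0 sigma tau k :
  moves x0 sigma tau (k.*2.+2) =
  rcons (rcons (moves x0 sigma tau k.*2) (tau (x0 :: moves x0 sigma tau k.*2)))
    (sigma (x0 :: rcons (moves x0 sigma tau k.*2) (tau (x0 :: moves x0 sigma tau k.*2)))).
Proof. by rewrite /= ?odd_double /= ?odd_double /= ?odd_double. Qed.

Theorem proposition4 (U V : seq int) (hU : U != [::]) (hV : V != [::]) :
  ~ (forall y : int, winning U V y <-> y = 0) <->
  exists x : int, x != 0 /\ forall v, v \in V -> exists2 u, u \in U & u + v = - x.
Proof.
split.
- move=> Hn; apply: NNPP => H; apply: Hn => y; split; last first.
    move=> ->; exists (fun _ => head 0 U); split; first by move=> h; exact: head_in.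
    by move=> tau _; left.
  move=> [sigma [Ls Hs]]; apply: NNPP => y0.
  have y0' : y != 0 by apply/eqP.
  pose P c := fun v : int => all (fun u => u + v != - c) U.
  pose tau : strategy := fun h => let c := \sum_(m <- h) m in
     if has (P c) V then nth 0 V (find (P c) V) else head 0 V.
  have Lt : legal V tau.
    move=> h; rewrite /tau; case: ifP => [hh|_]; last exact: head_in.
    by apply: mem_nth; rewrite -has_find.
  have key : forall c, c != 0 -> forall u, u \in U -> c + tau (c :: [::]) + u != 0 -> True by [].
  have step : forall h, \sum_(m <- h) m != 0 -> forall u, u \in U ->
      \sum_(m <- h) m + tau h + u != 0.
    move=> h hc u uU.
    have hh : has (P (\sum_(m <- h) m)) V.
      apply: NNPP => nh; apply: H; exists (\sum_(m <- h) m); split => // v vV.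
      apply: NNPP => nu; apply: nh; apply/hasP; exists v => //.
      apply/allP => u' u'U; apply/negP => /eqP e; apply: nu; by exists u'.
    have := nth_find 0 hh; rewrite /tau hh => /allP /(_ u uU).
    apply: contra => /eqP e; apply/eqP; apply: (addrI (\sum_(m <- h) m)); rewrite addrN -[in RHS]e; ring.
  have inv : forall k, y + \sum_(m <- moves y sigma tau k.*2) m != 0.
    elim=> [|k IH]; first by rewrite /= big_nil addr0.
    rewrite doubleS moves2 !sum_rcons.
    have := step (y :: moves y sigma tau k.*2); rewrite big_cons => /(_ IH).
    move/(_ _ (Ls (y :: rcons (moves y sigma tau k.*2) (tau (y :: moves y sigma tau k.*2))))).
    by rewrite !addrA.
  case: (Hs tau Lt) => [e|[k e]]; first by move/eqP: y0'.
  by have := inv k.+1; rewrite doubleS -/(round_end y sigma tau k) e eqxx.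
- move=> [x [x0 Hx]] Hall.
  pose P v := fun u : int => u + v == - x.
  pose sigma : strategy := fun h => let v := last 0 h in
     if has (P v) U then nth 0 U (find (P v) U) else head 0 U.
  have Ls : legal U sigma.
    move=> h; rewrite /sigma; case: ifP => [hh|_]; last exact: head_in.
    by apply: mem_nth; rewrite -has_find.
  have : winning U V x.
    exists sigma; split => // tau LV; right; exists 0%N.
    rewrite /round_end (moves2 _ _ _ 0) !sum_rcons /= big_nil add0r /sigma /=.
    have [u uU e] := Hx _ (LV [:: x]).
    have hh : has (P (tau [:: x])) U by apply/hasP; exists u => //; apply/eqP.
    rewrite hh; set w := U`_ _.
    have e2 : w + tau [:: x] = - x by apply/eqP; exact: (nth_find 0 hh).
    by rewrite (addrC (tau [:: x]) w) e2 addrN.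
  move=> hw; move: x0; rewrite (proj1 (Hall x) hw) eqxx; done.
Qed.
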